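(* Suppose Assumptions A1 and A2 hold, the state space $\mathsf X$ is a finite set (with the discrete topology), and $\hat g$ and the numbers $\int\phi(x,y,\eta)\nu(d\eta)$ ($x,y\in\mathsf X$) are finite. Then Assumption A3 holds for every $p\ge1$, and $\mathcal L_\Phi^p=\mathcal L_\Phi$ for all $p\ge1$. In particular, statements (b)–(e) below hold for every $p\ge1$ if and only if $\mathcal L_\Phi<0$: (b) a Markov solution exists in $\mathcal H_p$; (c) a unique Markov solution exists in $\mathcal H_p$; (d) there is $h\in\mathcal H_p$ such that $T^nh$ converges in $L_p(\pi)$ to a limit in $\mathcal H_p$; (e) a unique Markov solution $h^*$ exists in $\mathcal H_p$ and $T^nh\to h^*$ for every $h\in\mathcal H_p$.
   Context: Standing setting: $\mathsf X$ and $\mathsf W$ are separable, completely metrizable topological spaces with their Borel $\sigma$-algebras. $\{X_t\}_{t\ge0}$ is a stationary Markov process on $\mathsf X$ with transition kernel $\Pi$ and stationary marginal $\pi$; $\Pi^n$ is the $n$-step kernel. $\{\eta_t\}$ is iid with law $\nu$, independent of $\{X_t\}$. $\phi,g:\mathsf X\times\mathsf X\times\mathsf W\to[0,\infty)$ are Borel and $\Phi_{t+1}=\phi(X_t,X_{t+1},\eta_{t+1})$, $G_{t+1}=g(X_t,X_{t+1},\eta_{t+1})$. $\mathbb E_x$ conditions on $X_0=x$; $\mathbb E$ is unconditional. $L_p(\pi)$ ($p\ge1$) is the Banach lattice of functions $h:\mathsf X\to\mathbb R$ with $\int|h|^pd\pi<\infty$ modulo $\pi$-null sets; $\mathcal H_p$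 its nonnegative elements. $Vh(x)=\int h(y)[\int\phi(x,y,\eta)\nu(d\eta)]\Pi(x,dy)$, $\hat g(x)=\int\int\phi g\,d\nu\,\Pi(x,dy)$, $Th=Vh+\hat g$. A Markov solution in $\mathcal H_p$ is $h\in\mathcal H_p$ with $h=Th$. A1: $\phi>0$ everywhere and $G_t>0$ with positive probability. A2: for every Borel $B$ with $\pi(B)>0$ and every $x$ there is $n$ with $\Pi^n(x,B)>0$. A3 (for a given $p\ge1$): $\hat g\in\mathcal H_p$ and $V$ maps $L_p(\pi)$ into itself and some power $V^i$ is compact on $L_p(\pi)$. $\mathcal L_\Phi^p:=\lim_{n}\frac{1}{np}\ln\int(\mathbb E_x\prod_{t=1}^n\Phi_t)^p\pi(dx)$ and $\mathcal L_\Phi:=\mathcal L_\Phi^1=\lim_n\frac1n\ln\mathbb E\prod_{t=1}^n\Phi_t$. *)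

(* Defs.v *)
(* finite state space X = {0,...,N-1}, real-valued functions nat -> R. *)
From Stdlib Require Import Reals Lra Lia List.
Import ListNotations.
Open Scope R_scope.

Definition sumN (N : nat) (f : nat -> R) : R :=
  fold_right Rplus 0 (map f (seq 0 N)).

Definition measB (N : nat) (pi : nat -> R) (B : nat -> bool) : R :=
  sumN N (fun x => if B x then pi x else 0).

Fixpoint Pn (N : nat) (P : nat -> nat -> R) (n : nat) (x y : nat) : R :=
  match n with
  | O => if Nat.eqb x y then 1 else 0
  | S m => sumN N (fun z => P x z * Pn N P m z y)
  end.

Definition PnB (N : nat) (P : nat -> nat -> R) (n x : nat) (B : nat -> bool) : R :=
  sumN N (fun y => if B y then Pn N P n x y else 0).

(* x |-> x^p for x >= 0 (with 0^p = 0) *)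
Definition rpow (x p : R) : R := if Rlt_dec 0 x then Rpower x p else 0.

(* The operators of the paper; phib x y = \int phi(x,y,eta) nu(d eta),
   gam x y = \int phi(x,y,eta) g(x,y,eta) nu(d eta). *)
Definition Vop (N : nat) (P phib : nat -> nat -> R) (h : nat -> R) : nat -> R :=
  fun x => sumN N (fun y => h y * phib x y * P x y).

Definition ghat (N : nat) (P gam : nat -> nat -> R) : nat -> R :=
  fun x => sumN N (fun y => gam x y * P x y).

Definition Top (N : nat) (P phib gam : nat -> nat -> R) (h : nat -> R) : nat -> R :=
  fun x => Vop N P phib h x + ghat N P gam x.

Definition Lpnorm (N : nat) (pi : nat -> R) (p : R) (f : nat -> R) : R :=
  rpow (sumN N (fun x => rpow (Rabs (f x)) p * pi x)) (/ p).

Definition aeeq (N : nat) (pi : nat -> R) (f g : nat -> R) : Prop :=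
  forall x, (x < N)%nat -> 0 < pi x -> f x = g x.

(* membership in H_p: nonnegative element of L_p(pi) (every function on a finite
   space is in L_p(pi)) *)
Definition inHp (N : nat) (pi : nat -> R) (h : nat -> R) : Prop :=
  forall x, (x < N)%nat -> 0 < pi x -> 0 <= h x.

Definition LpConv (N : nat) (pi : nat -> R) (p : R) (fs : nat -> nat -> R) (f : nat -> R) : Prop :=
  Un_cv (fun n => Lpnorm N pi p (fun x => fs n x - f x)) 0.

Definition compact_op (N : nat) (pi : nat -> R) (p : R) (A : (nat -> R) -> (nat -> R)) : Prop :=
  forall f : nat -> nat -> R, (forall k, Lpnorm N pi p (f k) <= 1) ->
  exists (s : nat -> nat) (g : nat -> R),
    (forall k, (s k < s (S k))%nat) /\
    Un_cv (fun k => Lpnorm N pi p (fun x => A (f (s k)) x - g x)) 0.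

Definition markov_sol N pi P phib gam (h : nat -> R) : Prop :=
  inHp N pi h /\ aeeq N pi h (Top N P phib gam h).

Definition A3 N pi P phib gam (p : R) : Prop :=
  inHp N pi (ghat N P gam) /\
  (forall h1 h2, aeeq N pi h1 h2 -> aeeq N pi (Vop N P phib h1) (Vop N P phib h2)) /\
  exists i : nat, (1 <= i)%nat /\ compact_op N pi p (Nat.iter i (Vop N P phib)).

(* E_x prod_{t=1}^n Phi_t, computed by conditioning on the path of the chain
   (the eta's are iid, independent of X) *)
Fixpoint Eprod (N : nat) (P phib : nat -> nat -> R) (n x : nat) : R :=
  match n with
  | O => 1
  | S m => sumN N (fun y => P x y * phib x y * Eprod N P phib m y)
  end.

Definition LPhi_seq N pi P phib (p : R) (k : nat) : R :=
  ln (sumN N (fun x => rpow (Eprod N P phib (S k) x) p * pi x)) / (INR (S k) * p).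

(* (1/n) ln E prod_{t=1}^n Phi_t (X_0 ~ pi by stationarity), at n = k+1 *)
Definition LPhi1_seq N pi P phib (k : nat) : R :=
  ln (sumN N (fun x => pi x * Eprod N P phib (S k) x)) / INR (S k).

(* Main.v *)
Require Import Defs.
From Stdlib Require Import Reals Lra Lia List Classical ClassicalEpsilon.
Import ListNotations.
Open Scope R_scope.

Lemma fold_app (l l' : list R) :
  fold_right Rplus 0 (l ++ l') = fold_right Rplus 0 l + fold_right Rplus 0 l'.
Proof. induction l; simpl; [ring| rewrite IHl; ring]. Qed.

Lemma sumN_0 f : sumN 0 f = 0.
Proof. reflexivity. Qed.

Lemma sumN_S N f : sumN (S N) f = sumN N f + f N.
Proof. unfold sumN. rewrite seq_S, map_app, fold_app. simpl. ring. Qed.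

Lemma sumN_ext N f g : (forall x, (x < N)%nat -> f x = g x) -> sumN N f = sumN N g.
Proof. induction N; intros H; [reflexivity|]. rewrite !sumN_S, IHN, H; auto; intros; apply H; lia. Qed.

Lemma sumN_le N f g : (forall x, (x < N)%nat -> f x <= g x) -> sumN N f <= sumN N g.
Proof. induction N; intros H; [unfold sumN; simpl; lra|]. rewrite !sumN_S.
  assert (sumN N f <= sumN N g) by (apply IHN; intros; apply H; lia). specialize (H N). 
  assert (f N <= g N) by (apply H; lia). lra. Qed.

Lemma sumN_plus N f g : sumN N (fun x => f x + g x) = sumN N f + sumN N g.
Proof. induction N; [unfold sumN; simpl; ring|]. rewrite !sumN_S, IHN. ring. Qed.

Lemma sumN_scal N c f : sumN N (fun x => c * f x) = c * sumN N f.
Proof. induction N; [unfold sumN; simpl; ring|]. rewrite !sumN_S, IHN. ring. Qed.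

Lemma sumN_opp N f : sumN N (fun x => - f x) = - sumN N f.
Proof. induction N; [unfold sumN; simpl; ring|]. rewrite !sumN_S, IHN. ring. Qed.

Lemma sumN_nonneg N f : (forall x, (x < N)%nat -> 0 <= f x) -> 0 <= sumN N f.
Proof. intros H. replace 0 with (sumN N (fun _ => 0)). apply sumN_le; auto.
  induction N; [reflexivity|]. rewrite sumN_S, IHN; [ring|]. intros; apply H; lia. Qed.

Lemma sumN_zero N : sumN N (fun _ => 0) = 0.
Proof. induction N; [reflexivity|]. rewrite sumN_S, IHN; ring. Qed.

Lemma sumN_ge_term N f y : (forall x, (x < N)%nat -> 0 <= f x) -> (y < N)%nat -> f y <= sumN N f.
Proof. induction N; intros H Hy; [lia|]. rewrite sumN_S.
  destruct (Nat.eq_dec y N) as [->|n].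
  - assert (0 <= sumN N f) by (apply sumN_nonneg; intros; apply H; lia). lra.
  - assert (f y <= sumN N f) by (apply IHN; [intros; apply H; lia| lia]). 
    assert (0 <= f N) by (apply H; lia). lra. Qed.

Lemma sumN_abs N f : Rabs (sumN N f) <= sumN N (fun x => Rabs (f x)).
Proof. induction N; [rewrite !sumN_0, Rabs_R0; lra|]. rewrite !sumN_S.
  eapply Rle_trans; [apply Rabs_triang|]. lra. Qed.

Lemma sumN_cv N (F : nat -> nat -> R) G :
  (forall x, (x < N)%nat -> Un_cv (fun n => F n x) (G x)) ->
  Un_cv (fun n => sumN N (F n)) (sumN N G).
Proof. induction N; intros H.
  - intros e He; exists 0%nat; intros; unfold Rdist; rewrite !sumN_0, Rminus_0_r, Rabs_R0; lra.
  - rewrite sumN_S. eapply Un_cv_ext.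
    + intros n; symmetry; apply sumN_S.
    + apply CV_plus; [apply IHN; intros; apply H; lia| apply H; lia]. Qed.

Lemma fin_min N (Q : nat -> Prop) (F : nat -> R) :
  (forall x, (x < N)%nat -> Q x -> 0 < F x) ->
  exists d, 0 < d /\ forall x, (x < N)%nat -> Q x -> d <= F x.
Proof. induction N; intros H.
  - exists 1; split; [lra| intros; lia].
  - destruct IHN as [d [Hd Hd']]; [intros; apply H; auto; lia|].
    destruct (classic (Q N)) as [q|q].
    + assert (0 < F N) by (apply H; auto). exists (Rmin d (F N)); split; [apply Rmin_glb_lt; auto|].
      intros x Hx Qx. destruct (Nat.eq_dec x N) as [->|n]; [apply Rmin_r|].
      eapply Rle_trans; [apply Rmin_l| apply Hd'; auto; lia].
    + exists d; split; auto. intros x Hx Qx. destruct (Nat.eq_dec x N) as [->|n]; [tauto|]. apply Hd'; auto; lia.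
Qed.

Lemma fin_max N (Q : nat -> Prop) (F : nat -> R) :
  exists B, 0 < B /\ forall x, (x < N)%nat -> Q x -> F x <= B.
Proof. induction N.
  - exists 1; split; [lra| intros; lia].
  - destruct IHN as [d [Hd Hd']].
    exists (Rmax d (Rabs (F N))); split; [eapply Rlt_le_trans; [apply Hd| apply Rmax_l]|].
    intros x Hx Qx. destruct (Nat.eq_dec x N) as [->|n].
    + eapply Rle_trans; [apply RRle_abs| apply Rmax_r].
    + eapply Rle_trans; [apply Hd'; auto; lia| apply Rmax_l].
Qed.

Lemma fin_event N (Q : nat -> Prop) (Rl : nat -> nat -> Prop) :
  (forall x, (x < N)%nat -> Q x -> exists M, forall n, (n >= M)%nat -> Rl n x) ->
  exists M, forall n, (n >= M)%nat -> forall x, (x < N)%nat -> Q x -> Rl n x.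
Proof. induction N; intros H.
  - exists 0%nat; intros; lia.
  - destruct IHN as [M HM]; [intros; apply H; auto; lia|].
    destruct (classic (Q N)) as [q|q].
    + destruct (H N) as [M2 HM2]; auto. exists (max M M2). intros n Hn x Hx Qx.
      destruct (Nat.eq_dec x N) as [->|ne]; [apply HM2; lia| apply HM; auto; lia].
    + exists M. intros n Hn x Hx Qx. destruct (Nat.eq_dec x N) as [->|ne]; [tauto| apply HM; auto; lia].
Qed.

Lemma ln_le_m x y : 0 < x -> x <= y -> ln x <= ln y.
Proof. intros Hx [Hl|He]; [left; apply ln_increasing; auto| subst; lra]. Qed.

Lemma exp_le_m x y : x <= y -> exp x <= exp y.
Proof. intros [Hl|He]; [left; apply exp_increasing; auto| subst; lra]. Qed.

Lemma small_inv a e : 0 < e -> exists M, forall m, (m >= M)%nat -> Rabs a / INR (S m) < e.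
Proof. intros He. destruct (archimed_cor1 (e / (Rabs a + 1))) as [M [HM HM0]].
  { apply Rdiv_lt_0_compat; auto. pose proof (Rabs_pos a); lra. }
  exists M. intros m Hm. pose proof (Rabs_pos a).
  assert (HM1 : 0 < INR M) by (apply lt_0_INR; auto).
  assert (INR M <= INR (S m)) by (apply le_INR; lia).
  assert (/ INR (S m) <= / INR M) by (apply Rinv_le_contravar; auto).
  assert (/ INR M * (Rabs a + 1) < e).
  { apply Rmult_lt_reg_r with (/ (Rabs a + 1)). apply Rinv_0_lt_compat; lra.
    rewrite Rmult_assoc, Rinv_r; [|lra]. rewrite Rmult_1_r. exact HM. }
  unfold Rdiv. assert (0 <= / INR (S m)) by (left; apply Rinv_0_lt_compat; apply lt_0_INR; lia).
  nra. Qed.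

Lemma quasi_add (u : nat -> R) C0 : 0 <= C0 ->
  (forall n k, Rabs (u (n + k)%nat - u n - u k) <= C0) ->
  exists L, Un_cv (fun j => u (S j) / INR (S j)) L /\
    forall j, Rabs (u (S j) / INR (S j) - L) <= C0 / INR (S j).
Proof. intros HC Hu.
  assert (Ha : forall k m, Rabs (u (S m * k)%nat - INR (S m) * u k) <= INR (S m) * C0).
  { intros k m. induction m.
    - simpl. replace (k + 0)%nat with k by lia. rewrite Rmult_1_l. unfold Rminus. rewrite Rplus_opp_r, Rabs_R0. lra.
    - replace (S (S m) * k)%nat with (k + S m * k)%nat by (simpl; lia).
      specialize (Hu k (S m * k)%nat). rewrite S_INR.
      replace (u (k + S m * k)%nat - (INR (S m) + 1) * u k) with
        ((u (k + S m * k)%nat - u k - u (S m * k)%nat) + (u (S m * k)%nat - INR (S m) * u k)) by ring.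
      eapply Rle_trans; [apply Rabs_triang|]. lra. }
  assert (Hb : forall n k, Rabs (u (S n) / INR (S n) - u (S k) / INR (S k)) <= C0 / INR (S n) + C0 / INR (S k)).
  { intros n k. pose proof (Ha (S n) k) as A1. pose proof (Ha (S k) n) as A2.
    replace (S n * S k)%nat with (S k * S n)%nat in A2 by lia.
    set (w := u (S k * S n)%nat) in *.
    assert (P1 : 0 < INR (S n)) by (apply lt_0_INR; lia). assert (P2 : 0 < INR (S k)) by (apply lt_0_INR; lia).
    assert (E1 : Rabs (w / (INR (S k) * INR (S n)) - u (S n) / INR (S n)) <= C0 / INR (S n)).
    { replace (w / (INR (S k) * INR (S n)) - u (S n) / INR (S n)) with ((w - INR (S k) * u (S n)) / (INR (S k) * INR (S n))) by (field; lra).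
      unfold Rdiv at 1; rewrite Rabs_mult, Rabs_inv, (Rabs_right (INR (S k) * INR (S n))) by nra.
      apply Rmult_le_reg_r with (INR (S k) * INR (S n)); [nra|].
      match goal with |- ?A * / ?B * ?C <= _ => replace (A * / B * C) with A by (field; nra) end.
      match goal with |- _ <= ?D * ?E => replace (D * E) with (INR (S k) * C0) by (field; lra) end. auto. }
    assert (E2 : Rabs (w / (INR (S k) * INR (S n)) - u (S k) / INR (S k)) <= C0 / INR (S k)).
    { replace (w / (INR (S k) * INR (S n)) - u (S k) / INR (S k)) with ((w - INR (S n) * u (S k)) / (INR (S k) * INR (S n))) by (field; lra).
      unfold Rdiv at 1; rewrite Rabs_mult, Rabs_inv, (Rabs_right (INR (S k) * INR (S n))) by nra.
      apply Rmult_le_reg_r with (INR (S k) * INR (S n)); [nra|].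
      match goal with |- ?A * / ?B * ?C <= _ => replace (A * / B * C) with A by (field; nra) end.
      match goal with |- _ <= ?D * ?E => replace (D * E) with (INR (S n) * C0) by (field; lra) end. auto. }
    replace (u (S n) / INR (S n) - u (S k) / INR (S k)) with
      (- (w / (INR (S k) * INR (S n)) - u (S n) / INR (S n)) + (w / (INR (S k) * INR (S n)) - u (S k) / INR (S k))) by ring.
    eapply Rle_trans; [apply Rabs_triang|]. rewrite Rabs_Ropp. lra. }
  assert (Hsm : forall e, 0 < e -> exists M, forall m, (m >= M)%nat -> C0 / INR (S m) < e).
  { intros e He. destruct (small_inv C0 e He) as [M HM]. exists M. intros m Hm. specialize (HM m Hm).
    rewrite Rabs_right in HM; lra. }
  destruct (R_complete (fun j => u (S j) / INR (S j))) as [L HL].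
  { intros e He. destruct (Hsm (e / 2)) as [M HM]; [lra|]. exists M. intros n m Hn Hm. unfold Rdist.
    specialize (Hb n m). pose proof (HM n Hn). pose proof (HM m Hm). lra. }
  exists L. split; auto. intros j.
  destruct (Rle_dec (Rabs (u (S j) / INR (S j) - L)) (C0 / INR (S j))) as [ok|nok]; auto. exfalso.
  set (e := Rabs (u (S j) / INR (S j) - L) - C0 / INR (S j)).
  assert (He : 0 < e) by (unfold e; lra).
  destruct (HL (e / 2)) as [M1 HM1]; [lra|]. destruct (Hsm (e / 2)) as [M2 HM2]; [lra|].
  set (m := max M1 M2). specialize (HM1 m ltac:(lia)). specialize (HM2 m ltac:(lia)).
  specialize (Hb j m). unfold Rdist in HM1.
  assert (Rabs (u (S j) / INR (S j) - L) <= Rabs (u (S j) / INR (S j) - u (S m) / INR (S m)) + Rabs (u (S m) / INR (S m) - L)).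
  { replace (u (S j) / INR (S j) - L) with ((u (S j) / INR (S j) - u (S m) / INR (S m)) + (u (S m) / INR (S m) - L)) by ring.
    apply Rabs_triang. }
  unfold e in *. lra.
Qed.

Lemma cv_of_bound (a : nat -> R) L K : (forall j, Rabs (a j - L) <= K / INR (S j)) -> Un_cv a L.
Proof. intros Hb e He. destruct (small_inv K e He) as [M HM]. exists M. intros n Hn. unfold Rdist.
  specialize (HM n Hn). specialize (Hb n). pose proof (RRle_abs K).
  assert (K / INR (S n) <= Rabs K / INR (S n)).
  { unfold Rdiv. apply Rmult_le_compat_r; auto. left; apply Rinv_0_lt_compat, lt_0_INR; lia. }
  lra. Qed.

Lemma arch_big a b : 0 < a -> exists i, b < INR i * a.
Proof. intros Ha. destruct (archimed_cor1 (a / (Rabs b + 1))) as [M [HM HM0]].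
  { apply Rdiv_lt_0_compat; auto. pose proof (Rabs_pos b); lra. }
  exists M. pose proof (Rabs_pos b). pose proof (RRle_abs b).
  assert (HM1 : 0 < INR M) by (apply lt_0_INR; auto).
  assert (Rabs b + 1 < INR M * a).
  { apply Rmult_lt_reg_r with (/ INR M * / (Rabs b + 1)).
    - apply Rmult_lt_0_compat; apply Rinv_0_lt_compat; lra.
    - replace ((Rabs b + 1) * (/ INR M * / (Rabs b + 1))) with (/ INR M) by (field; lra).
      replace (INR M * a * (/ INR M * / (Rabs b + 1))) with (a / (Rabs b + 1)) by (field; lra). auto. }
  lra. Qed.

Lemma Rabs_le_between a b : Rabs a <= b -> - b <= a <= b.
Proof. intros H. pose proof (Rle_abs a). pose proof (Rle_abs (- a)). rewrite Rabs_Ropp in *. lra. Qed.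

Lemma Un_cv_const a : Un_cv (fun _ => a) a.
Proof. intros e He. exists 0%nat. intros. unfold Rdist. rewrite Rminus_diag, Rabs_R0. auto. Qed.

Lemma Un_cv_shift u l : Un_cv u l -> Un_cv (fun n => u (S n)) l.
Proof. intros Hu e He. destruct (Hu e He) as [M HM]. exists M. intros. apply HM. lia. Qed.

Lemma exp_INR_mult n L : exp (INR n * L) = exp L ^ n.
Proof. induction n; [simpl; rewrite Rmult_0_l, exp_0; reflexivity|].
  rewrite S_INR, Rmult_plus_distr_r, Rmult_1_l, exp_plus, IHn. simpl. ring. Qed.

Lemma fchoice {A} (Q : nat -> A -> Prop) : (forall x, exists l, Q x l) -> exists f, forall x, Q x (f x).
Proof. intros Hq. exists (fun x => proj1_sig (ClassicalEpsilon.constructive_indefinite_description _ (Hq x))).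
  intros x. exact (proj2_sig (ClassicalEpsilon.constructive_indefinite_description _ (Hq x))). Qed.

Lemma strict_mono (s : nat -> nat) : (forall k, (s k < s (S k))%nat) -> forall a b, (a < b)%nat -> (s a < s b)%nat.
Proof. intros Hs a b Hab. induction Hab; [apply Hs|]. specialize (Hs m). lia. Qed.

Lemma strict_ge (s : nat -> nat) : (forall k, (s k < s (S k))%nat) -> forall k, (k <= s k)%nat.
Proof. intros Hs k. induction k; [lia|]. specialize (Hs k). lia. Qed.

Lemma subseq_cv (u : nat -> R) l (s : nat -> nat) : (forall k, (s k < s (S k))%nat) -> Un_cv u l -> Un_cv (fun k => u (s k)) l.
Proof. intros Hs Hu e He. destruct (Hu e He) as [M HM]. exists M. intros n Hn. apply HM.
  pose proof (strict_ge s Hs n). lia. Qed.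

Lemma bw1 (u : nat -> R) B : (forall k, Rabs (u k) <= B) ->
  exists s l, (forall k, (s k < s (S k))%nat) /\ Un_cv (fun k => u (s k)) l.
Proof. intros Hb.
  destruct (Bolzano_Weierstrass u (fun c => - B <= c <= B) (compact_P3 (- B) B)) as [l Hl].
  { intros n. apply Rabs_le_between; auto. }
  assert (Hp : forall n k, {p | (n <= p)%nat /\ Rabs (u p - l) < / INR (S k)}).
  { intros n k. apply constructive_indefinite_description.
    assert (Hpos : 0 < / INR (S k)) by (apply Rinv_0_lt_compat, lt_0_INR; lia).
    destruct (Hl (disc l (mkposreal _ Hpos)) n) as [p [Hp1 Hp2]].
    - exists (mkposreal _ Hpos). intros y Hy. exact Hy.
    - exists p. split; auto. }
  assert (H1 : forall n k, (n <= proj1_sig (Hp n k))%nat) by (intros n k; exact (proj1 (proj2_sig (Hp n k)))).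
  assert (H2 : forall n k, Rabs (u (proj1_sig (Hp n k)) - l) < / INR (S k)) by (intros n k; exact (proj2 (proj2_sig (Hp n k)))).
  exists (fix s k := match k with 0 => proj1_sig (Hp 0%nat 0%nat) | S k' => proj1_sig (Hp (S (s k')) (S k')) end).
  exists l. split.
  - intros k. simpl. exact (H1 (S _) (S k)).
  - apply cv_of_bound with (K := 1). intros [|k]; unfold Rdist; unfold Rdiv; rewrite Rmult_1_l; left.
    + apply H2.
    + apply H2.
Qed.

Lemma bwN n (Q : nat -> Prop) (F : nat -> nat -> R) B :
  (forall k x, (x < n)%nat -> Q x -> Rabs (F k x) <= B) ->
  exists s G, (forall k, (s k < s (S k))%nat) /\ forall x, (x < n)%nat -> Q x -> Un_cv (fun k => F (s k) x) (G x).
Proof. induction n; intros Hb.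
  - exists (fun k => k), (fun _ => 0). split; [intros; lia| intros; lia].
  - destruct IHn as [s [G [Hs HG]]]; [intros; apply Hb; auto; lia|].
    destruct (classic (Q n)) as [q|q].
    + destruct (bw1 (fun k => F (s k) n) B) as [s' [l [Hs' Hl]]]; [intros; apply Hb; auto|].
      exists (fun k => s (s' k)), (fun x => if Nat.eqb x n then l else G x). split.
      * intros k. apply strict_mono; auto.
      * intros x Hx Qx. destruct (Nat.eqb_spec x n) as [->|ne]; auto.
        apply (subseq_cv (fun k => F (s k) x)); auto. apply HG; auto; lia.
    + exists s, G. split; auto. intros x Hx Qx. destruct (Nat.eq_dec x n) as [->|ne]; [tauto|]. apply HG; auto; lia.
Qed.

Lemma fin_all N (Q : nat -> Prop) (Pd : nat -> R -> Prop) :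
  (forall x d d', 0 < d' <= d -> Pd x d -> Pd x d') ->
  (forall x, (x < N)%nat -> Q x -> exists d, 0 < d /\ Pd x d) ->
  exists d, 0 < d /\ forall x, (x < N)%nat -> Q x -> Pd x d.
Proof. intros Hm. induction N; intros H.
  - exists 1; split; [lra| intros; lia].
  - destruct IHN as [d [Hd Hd']]; [intros; apply H; auto; lia|].
    destruct (classic (Q N)) as [q|q].
    + destruct (H N) as [e [He He']]; auto. exists (Rmin d e); split; [apply Rmin_glb_lt; auto|].
      assert (0 < Rmin d e) by (apply Rmin_glb_lt; auto).
      intros x Hx Qx. destruct (Nat.eq_dec x N) as [->|n].
      * apply Hm with e; auto. split; auto; apply Rmin_r.
      * apply Hm with d; [split; auto; apply Rmin_l| apply Hd'; auto; lia].
    + exists d; split; auto. intros x Hx Qx. destruct (Nat.eq_dec x N) as [->|n]; [tauto|]. apply Hd'; auto; lia.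
Qed.

Record Hyps (N : nat) (pi : nat -> R) (P phib gam : nat -> nat -> R) : Prop := mkH {
  Hpi0 : forall x, (x < N)%nat -> 0 <= pi x;
  Hpi1 : sumN N pi = 1;
  HP0 : forall x y, (x < N)%nat -> (y < N)%nat -> 0 <= P x y;
  HP1 : forall x, (x < N)%nat -> sumN N (P x) = 1;
  Hstat : forall y, (y < N)%nat -> sumN N (fun x => pi x * P x y) = pi y;
  HA1phi : forall x y, (x < N)%nat -> (y < N)%nat -> 0 < phib x y;
  Hgam0 : forall x y, (x < N)%nat -> (y < N)%nat -> 0 <= gam x y;
  HA1g : exists x y, (x < N)%nat /\ (y < N)%nat /\ 0 < pi x /\ 0 < P x y /\ 0 < gam x y;
  HA2 : forall B : nat -> bool, 0 < measB N pi B ->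
         forall x, (x < N)%nat -> exists n, 0 < PnB N P n x B }.

Definition inS N (pi : nat -> R) x := (x < N)%nat /\ 0 < pi x.
Definition Vn N P phib k (f : nat -> R) := Nat.iter k (Vop N P phib) f.

Lemma sumN_delta N f y : (y < N)%nat -> sumN N (fun z => if Nat.eqb z y then f z else 0) = f y.
Proof. induction N; intros Hy; [lia|]. rewrite sumN_S. destruct (Nat.eq_dec y N) as [->|ne].
  - rewrite Nat.eqb_refl. rewrite sumN_ext with (g := fun _ => 0), sumN_zero; [ring|].
    intros x Hx. destruct (Nat.eqb_spec x N); [lia|auto].
  - rewrite IHN by lia. destruct (Nat.eqb_spec N y); [lia|ring]. Qed.

Section S.
Context {N : nat} {pi : nat -> R} {P phib gam : nat -> nat -> R} (H : Hyps N pi P phib gam).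

Lemma closure x y : inS N pi x -> (y < N)%nat -> 0 < P x y -> 0 < pi y.
Proof. intros [Hx Hpx] Hy HPy. rewrite <- (Hstat _ _ _ _ _ H y Hy).
  eapply Rlt_le_trans; [| apply sumN_ge_term with (y := x); auto].
  - apply Rmult_lt_0_compat; auto.
  - intros z Hz. apply Rmult_le_pos; [apply (Hpi0 _ _ _ _ _ H); auto| apply (HP0 _ _ _ _ _ H); auto]. Qed.

Lemma closure0 x y : inS N pi x -> (y < N)%nat -> ~ (0 < pi y) -> P x y = 0.
Proof. intros Hx Hy Hn. destruct (HP0 _ _ _ _ _ H x y (proj1 Hx) Hy) as [h|h]; auto.
  exfalso; apply Hn; eapply closure; eauto. Qed.

Lemma Pn_nonneg k x y : (x < N)%nat -> 0 <= Pn N P k x y.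
Proof. revert x. induction k; intros x Hx; simpl.
  - destruct (Nat.eqb x y); lra.
  - apply sumN_nonneg. intros z Hz. apply Rmult_le_pos; [apply (HP0 _ _ _ _ _ H); auto| apply IHk; auto]. Qed.

Lemma path x y : (x < N)%nat -> inS N pi y -> exists k, 0 < Pn N P k x y.
Proof. intros Hx [Hy Hpy].
  destruct (HA2 _ _ _ _ _ H (fun z => Nat.eqb z y)) with (x := x) as [k Hk]; auto.
  - unfold measB. rewrite sumN_delta; auto.
  - exists k. unfold PnB in Hk. rewrite sumN_delta in Hk; auto. Qed.

Lemma phib_bounds : exists lo hi, 0 < lo <= 1 /\ 1 <= hi /\
  forall x y, (x < N)%nat -> (y < N)%nat -> lo <= phib x y <= hi.
Proof.
  assert (A1: exists d, 0 < d /\ forall x, (x < N)%nat -> True -> forall y, (y < N)%nat -> d <= phib x y).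
  { apply (fin_all N (fun _ => True) (fun x d => forall y, (y < N)%nat -> d <= phib x y)).
  - intros x d d' Hdd Hx y Hy. specialize (Hx y Hy). lra.
  - intros x Hx _. destruct (fin_min N (fun _ => True) (phib x)) as [d0 [Hd0 Hd0']].
    + intros; apply (HA1phi _ _ _ _ _ H); auto.
    + exists d0; split; auto. }
  assert (A2: exists d, 0 < d /\ forall x, (x < N)%nat -> True -> forall y, (y < N)%nat -> phib x y <= / d).
  { apply (fin_all N (fun _ => True) (fun x d => forall y, (y < N)%nat -> phib x y <= / d)).
  - intros x e e' Hee Hx y Hy. specialize (Hx y Hy). assert (/ e <= / e') by (apply Rinv_le_contravar; lra). lra.
  - intros x Hx _. destruct (fin_max N (fun _ => True) (phib x)) as [B [HB HB']].
    exists (/ B); split; [apply Rinv_0_lt_compat; auto|]. intros y Hy. rewrite Rinv_inv. apply HB'; auto. }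
  destruct A1 as [d [Hd Hd']]. destruct A2 as [e [He He']].
  exists (Rmin d 1), (Rmax (/ e) 1). split; [split; [apply Rmin_glb_lt; lra| apply Rmin_r]|].
  split; [apply Rmax_r|]. intros x y Hx Hy. split.
  - eapply Rle_trans; [apply Rmin_l| apply Hd'; auto].
  - eapply Rle_trans; [apply He'; auto| apply Rmax_l].
Qed.

Lemma V_ext f g x : (forall y, (y < N)%nat -> f y = g y) -> Vop N P phib f x = Vop N P phib g x.
Proof. intros Hfg. unfold Vop. apply sumN_ext. intros y Hy. rewrite Hfg; auto. Qed.

Lemma V_S f g x : inS N pi x -> (forall y, inS N pi y -> f y = g y) -> Vop N P phib f x = Vop N P phib g x.
Proof. intros Hx Hfg. unfold Vop. apply sumN_ext. intros y Hy.
  destruct (Rlt_dec 0 (pi y)) as [h|h].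
  - rewrite Hfg; [auto| split; auto].
  - rewrite (closure0 x y); auto; ring. Qed.

Lemma Vn_S k f g x : inS N pi x -> (forall y, inS N pi y -> f y = g y) -> Vn N P phib k f x = Vn N P phib k g x.
Proof. revert x. induction k; intros x Hx Hfg; simpl; [apply Hfg; auto|].
  apply V_S; auto. Qed.

Lemma Vn_ext k f g x : (forall y, f y = g y) -> Vn N P phib k f x = Vn N P phib k g x.
Proof. revert x. induction k; intros x Hfg; simpl; [apply Hfg|]. apply V_ext; intros; apply IHk; auto. Qed.

Lemma Vn_succ k f x : Vn N P phib (S k) f x = Vop N P phib (Vn N P phib k f) x.
Proof. reflexivity. Qed.

Lemma Eprod_S k x : Eprod N P phib (S k) x = sumN N (fun y => P x y * phib x y * Eprod N P phib k y).
Proof. reflexivity. Qed.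

Lemma Pn_S k x y : Pn N P (S k) x y = sumN N (fun z => P x z * Pn N P k z y).
Proof. reflexivity. Qed.

Lemma Vn_lin k f g a b x :
  Vn N P phib k (fun y => a * f y + b * g y) x = a * Vn N P phib k f x + b * Vn N P phib k g x.
Proof. revert x; induction k; intros x; [reflexivity|]. rewrite !Vn_succ. unfold Vop.
  rewrite (sumN_ext _ _ (fun y => a * (Vn N P phib k f y * phib x y * P x y) + b * (Vn N P phib k g y * phib x y * P x y))).
  - rewrite sumN_plus, !sumN_scal. reflexivity.
  - intros y Hy. rewrite IHk. ring. Qed.

Lemma Vn_nonneg k f x : inS N pi x -> (forall y, inS N pi y -> 0 <= f y) -> 0 <= Vn N P phib k f x.
Proof. revert x; induction k; intros x Hx Hf; [apply Hf; auto|]. rewrite !Vn_succ. unfold Vop.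
  apply sumN_nonneg. intros y Hy. destruct (Rlt_dec 0 (pi y)) as [h|h].
  - assert (inS N pi y) by (split; auto). apply Rmult_le_pos; [apply Rmult_le_pos|].
    + apply IHk; auto.
    + left; apply (HA1phi _ _ _ _ _ H); auto; apply Hx.
    + apply (HP0 _ _ _ _ _ H); auto; apply Hx.
  - rewrite (closure0 x y); auto; lra. Qed.

Lemma Vn_mono k f g x : inS N pi x -> (forall y, inS N pi y -> f y <= g y) -> Vn N P phib k f x <= Vn N P phib k g x.
Proof. intros Hx Hfg.
  assert (0 <= Vn N P phib k (fun y => 1 * g y + (-1) * f y) x).
  { apply Vn_nonneg; auto. intros y Hy. specialize (Hfg y Hy). lra. }
  rewrite Vn_lin in H0. lra. Qed.

Lemma Vn_const k c x : Vn N P phib k (fun _ => c) x = c * Eprod N P phib k x.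
Proof. revert x; induction k; intros x; [unfold Vn; simpl; ring|]. rewrite !Vn_succ, Eprod_S. unfold Vop.
  rewrite <- sumN_scal. apply sumN_ext. intros y Hy. rewrite IHk. ring. Qed.

Lemma Vn_one k x : Vn N P phib k (fun _ => 1) x = Eprod N P phib k x.
Proof. rewrite Vn_const; ring. Qed.

Lemma E_bounds lo hi : 0 < lo -> (forall x y, (x < N)%nat -> (y < N)%nat -> lo <= phib x y <= hi) ->
  forall k x, (x < N)%nat -> lo ^ k <= Eprod N P phib k x <= hi ^ k.
Proof. intros Hlo Hb k. induction k; intros x Hx; [simpl; lra|]. simpl.
  rewrite <- (Rmult_1_r (lo * lo ^ k)), <- (Rmult_1_r (hi * hi ^ k)).
  rewrite <- (HP1 _ _ _ _ _ H x Hx), <- !sumN_scal. split; apply sumN_le; intros y Hy;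
  specialize (IHk y Hy); specialize (Hb x y Hx Hy); pose proof (HP0 _ _ _ _ _ H x y Hx Hy);
  assert (0 <= lo ^ k) by (apply pow_le; lra).
  - replace (lo * lo ^ k * P x y) with (P x y * lo * lo ^ k) by ring.
    apply Rmult_le_compat; try lra; [apply Rmult_le_pos; lra| apply Rmult_le_compat_l; lra].
  - replace (hi * hi ^ k * P x y) with (P x y * hi * hi ^ k) by ring.
    apply Rmult_le_compat; try lra; [apply Rmult_le_pos; [lra| apply (Rle_trans _ lo); lra]| ].
    apply Rmult_le_compat_l; lra. Qed.

Lemma E_nonneg k x : (x < N)%nat -> 0 <= Eprod N P phib k x.
Proof. destruct phib_bounds as [lo [hi [Hl [Hh Hb]]]]. intros Hx.
  pose proof (E_bounds lo hi (proj1 Hl) Hb k x Hx). pose proof (pow_le lo k). lra. Qed.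

Lemma E_pos k x : (x < N)%nat -> 0 < Eprod N P phib k x.
Proof. destruct phib_bounds as [lo [hi [Hl [Hh Hb]]]]. intros Hx.
  pose proof (E_bounds lo hi (proj1 Hl) Hb k x Hx). pose proof (pow_lt lo k (proj1 Hl)). lra. Qed.

Lemma Vn_path lo : 0 < lo -> (forall x y, (x < N)%nat -> (y < N)%nat -> lo <= phib x y) ->
  forall k f x y, inS N pi x -> inS N pi y -> (forall z, inS N pi z -> 0 <= f z) ->
  lo ^ k * Pn N P k x y * f y <= Vn N P phib k f x.
Proof. intros Hlo Hb k. induction k; intros f x y Hx Hy Hf.
  - simpl. destruct (Nat.eqb_spec x y) as [->|n]; [lra|]. specialize (Hf x Hx). lra.
  - rewrite !Vn_succ, Pn_S, <- tech_pow_Rmult. unfold Vop.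
    rewrite <- sumN_scal, Rmult_comm, <- sumN_scal. apply sumN_le. intros z Hz.
    destruct (Rlt_dec 0 (pi z)) as [h|h].
    + assert (Hzs : inS N pi z) by (split; auto). specialize (IHk f z y Hzs Hy Hf). 
      pose proof (HP0 _ _ _ _ _ H x z (proj1 Hx) Hz). pose proof (Hb x z (proj1 Hx) Hz).
      pose proof (Pn_nonneg k z y Hz). pose proof (Hf y Hy). pose proof (pow_le lo k (Rlt_le _ _ Hlo)).
      replace (f y * (lo * lo ^ k * (P x z * Pn N P k z y))) with ((lo ^ k * Pn N P k z y * f y) * lo * P x z) by ring.
      apply Rmult_le_compat_r; auto. apply Rmult_le_compat; try lra.
      apply Rmult_le_pos; [apply Rmult_le_pos|]; auto.
    + rewrite (closure0 x z); auto. lra. Qed.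

Lemma Eprod_Vn k x : Eprod N P phib k x = Vn N P phib k (fun _ => 1) x.
Proof. symmetry; apply Vn_one. Qed.

Lemma E_split a b x : Eprod N P phib (a + b) x = Vn N P phib a (Eprod N P phib b) x.
Proof. rewrite Eprod_Vn. unfold Vn. rewrite Nat.iter_add. apply Vn_ext. intros; apply Vn_one. Qed.

Lemma pow_le_dec lo n k : 0 < lo <= 1 -> (n <= k)%nat -> lo ^ k <= lo ^ n.
Proof. intros Hl Hnk. replace k with (n + (k - n))%nat by lia. rewrite pow_add.
  assert (lo ^ (k - n) <= 1) by (rewrite <- (pow1 (k - n)); apply pow_incr; lra).
  pose proof (pow_le lo n (Rlt_le _ _ (proj1 Hl))). pose proof (pow_le lo (k - n) (Rlt_le _ _ (proj1 Hl))). nra. Qed.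

Definition Harn (c : R) := forall n x y, inS N pi x -> inS N pi y ->
  c * Eprod N P phib n y <= Eprod N P phib n x.

Lemma harnack : exists c, 0 < c <= 1 /\ Harn c.
Proof.
  destruct phib_bounds as [lo [hi [Hl [Hh Hb]]]].
  assert (Hpair : forall x y, inS N pi x -> inS N pi y -> exists c, 0 < c /\
            forall n, c * Eprod N P phib n y <= Eprod N P phib n x).
  { intros x y Hx Hy. destruct (path x y (proj1 Hx) Hy) as [k Hk].
    set (q := Pn N P k x y) in *.
    assert (Hlk : 0 < lo ^ k) by (apply pow_lt; lra).
    assert (Hhk : 0 < hi ^ k) by (apply pow_lt; lra).
    assert (Hmq : 0 < Rmin q 1) by (apply Rmin_glb_lt; lra).
    exists (lo ^ k * Rmin q 1 / hi ^ k). split.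
    { unfold Rdiv. apply Rmult_lt_0_compat; [apply Rmult_lt_0_compat; auto| apply Rinv_0_lt_compat; auto]. }
    intros n. destruct (Compare_dec.le_lt_dec k n) as [Hkn|Hnk].
    - replace n with (k + (n - k))%nat by lia. set (m := (n - k)%nat).
      assert (H1 : lo ^ k * q * Eprod N P phib m y <= Eprod N P phib (k + m) x).
      { rewrite E_split. apply (Vn_path lo); auto; [lra| intros; apply Hb; auto|].
        intros z Hz; apply E_nonneg; apply Hz. }
      assert (H2 : Eprod N P phib (k + m) y <= hi ^ k * Eprod N P phib m y).
      { replace (k + m)%nat with (m + k)%nat by lia. rewrite E_split, <- Vn_const.
        apply Vn_mono; auto. intros z Hz. apply (E_bounds lo hi); auto; [lra| apply Hz]. }
      pose proof (E_nonneg m y (proj1 Hy)).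
      apply Rle_trans with (lo ^ k * Rmin q 1 * Eprod N P phib m y); [|
        apply Rle_trans with (lo ^ k * q * Eprod N P phib m y); auto;
        apply Rmult_le_compat_r; auto; apply Rmult_le_compat_l; [lra| apply Rmin_l]].
      replace (lo ^ k * Rmin q 1 * Eprod N P phib m y) with (lo ^ k * Rmin q 1 / hi ^ k * (hi ^ k * Eprod N P phib m y))
        by (field; lra).
      apply Rmult_le_compat_l; auto. left. unfold Rdiv. apply Rmult_lt_0_compat; [apply Rmult_lt_0_compat; auto| apply Rinv_0_lt_compat; auto].
    - pose proof (E_bounds lo hi (proj1 Hl) Hb n x (proj1 Hx)).
      pose proof (E_bounds lo hi (proj1 Hl) Hb n y (proj1 Hy)).
      assert (lo ^ k <= lo ^ n) by (apply pow_le_dec; auto; lia).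
      assert (hi ^ n <= hi ^ k) by (apply Rle_pow; auto; lia).
      assert (Rmin q 1 <= 1) by apply Rmin_r.
      apply Rle_trans with (lo ^ k * Rmin q 1 / hi ^ k * hi ^ k).
      + apply Rmult_le_compat_l; [|lra]. left. unfold Rdiv. apply Rmult_lt_0_compat; [apply Rmult_lt_0_compat; auto| apply Rinv_0_lt_compat; auto].
      + replace (lo ^ k * Rmin q 1 / hi ^ k * hi ^ k) with (lo ^ k * Rmin q 1) by (field; lra). nra. }
  assert (Hx1 : forall x, inS N pi x -> exists c, 0 < c /\ forall y, (y < N)%nat -> 0 < pi y ->
            forall n, (y < N)%nat -> c * Eprod N P phib n y <= Eprod N P phib n x).
  { intros x Hx. apply (fin_all N (fun y => 0 < pi y) (fun y c => forall n, (y < N)%nat -> c * Eprod N P phib n y <= Eprod N P phib n x)).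
    - intros y d d' Hd Hp n Hy. specialize (Hp n Hy). pose proof (E_nonneg n y Hy). nra.
    - intros y Hy Hpy. destruct (Hpair x y Hx (conj Hy Hpy)) as [c [Hc Hc']]. exists c; split; auto. }
  destruct (fin_all N (fun x => 0 < pi x) (fun x c => forall y, inS N pi y -> forall n, c * Eprod N P phib n y <= Eprod N P phib n x))
    as [c [Hc Hc']].
  - intros x d d' Hd Hp y Hy n. specialize (Hp y Hy n). pose proof (E_nonneg n y (proj1 Hy)). nra.
  - intros x Hx Hpx. destruct (Hx1 x (conj Hx Hpx)) as [c [Hc Hc']]. exists c; split; auto.
    intros y Hy n. apply Hc'; apply Hy.
  - exists (Rmin c 1). split; [split; [apply Rmin_glb_lt; lra| apply Rmin_r]|].
    intros n x y Hx Hy. pose proof (E_nonneg n y (proj1 Hy)).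
    apply Rle_trans with (c * Eprod N P phib n y); [apply Rmult_le_compat_r; auto; apply Rmin_l|].
    apply Hc'; auto; apply Hx.
Qed.

Definition sn n := sumN N (fun x => pi x * Eprod N P phib n x).

Lemma sum_pi_const K : sumN N (fun x => pi x * K) = K.
Proof. rewrite (sumN_ext _ _ (fun x => K * pi x)) by (intros; ring). rewrite sumN_scal, (Hpi1 _ _ _ _ _ H). ring. Qed.

Lemma exS : exists x0, inS N pi x0.
Proof. destruct (HA1g _ _ _ _ _ H) as [x [y [Hx [_ [Hp _]]]]]. exists x; split; auto. Qed.

Lemma pi_cases x : (x < N)%nat -> pi x = 0 \/ inS N pi x.
Proof. intros Hx. destruct (Hpi0 _ _ _ _ _ H x Hx) as [h|h]; [right; split; auto| left; auto]. Qed.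

Lemma sum_pi_le f g : (forall x, inS N pi x -> f x <= g x) ->
  sumN N (fun x => pi x * f x) <= sumN N (fun x => pi x * g x).
Proof. intros Hfg. apply sumN_le. intros x Hx. destruct (pi_cases x Hx) as [e|s].
  - rewrite e; lra.
  - apply Rmult_le_compat_l; [apply (Hpi0 _ _ _ _ _ H); auto| apply Hfg; auto]. Qed.

Lemma avg c n x : 0 < c -> Harn c -> inS N pi x ->
  c * sn n <= Eprod N P phib n x /\ c * Eprod N P phib n x <= sn n.
Proof. intros Hc Hh Hx. unfold sn. split.
  - rewrite <- sumN_scal. rewrite <- (sum_pi_const (Eprod N P phib n x)).
    rewrite (sumN_ext _ (fun y => c * (pi y * Eprod N P phib n y)) (fun y => pi y * (c * Eprod N P phib n y))) by (intros; ring).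
    apply sum_pi_le. intros y Hy. apply Hh; auto.
  - rewrite <- (sum_pi_const (c * Eprod N P phib n x)). apply sum_pi_le. intros y Hy. apply Hh; auto. Qed.

Lemma sn_pos n : 0 < sn n.
Proof. destruct harnack as [c [Hc Hh]]. destruct exS as [x0 Hx0].
  pose proof (avg c n x0 (proj1 Hc) Hh Hx0). pose proof (E_pos n x0 (proj1 Hx0)).
  assert (0 < c * Eprod N P phib n x0) by (apply Rmult_lt_0_compat; lra). lra. Qed.

Lemma sn_mult c n k : 0 < c -> Harn c ->
  c * sn n * sn k <= sn (n + k) <= sn n * sn k / c.
Proof. intros Hc Hh.
  assert (Hx : forall x, inS N pi x -> c * sn k * Eprod N P phib n x <= Eprod N P phib (n + k) x <= sn k / c * Eprod N P phib n x).
  { intros x Hx. rewrite E_split, <- !Vn_const. split; apply Vn_mono; auto; intros z Hz;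
    destruct (avg c k z Hc Hh Hz) as [A1 A2]; auto.
    apply Rmult_le_reg_l with c; auto. replace (c * (sn k / c)) with (sn k) by (field; lra). auto. }
  unfold sn at 3. split.
  - replace (c * sn n * sn k) with (sumN N (fun x => pi x * (c * sn k * Eprod N P phib n x))).
    + apply sum_pi_le. intros; apply Hx; auto.
    + rewrite (sumN_ext _ _ (fun x => (c * sn k) * (pi x * Eprod N P phib n x))) by (intros; ring).
      rewrite sumN_scal. unfold sn. ring.
  - replace (sn n * sn k / c) with (sumN N (fun x => pi x * (sn k / c * Eprod N P phib n x))).
    + apply sum_pi_le. intros; apply Hx; auto.
    + rewrite (sumN_ext _ _ (fun x => (sn k / c) * (pi x * Eprod N P phib n x))) by (intros; ring).
      rewrite sumN_scal. unfold sn. field. lra. Qed.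

Lemma Lexists : exists c L, 0 < c <= 1 /\ Harn c /\
  Un_cv (fun j => ln (sn (S j)) / INR (S j)) L /\
  forall j, Rabs (ln (sn (S j)) / INR (S j) - L) <= - ln c / INR (S j).
Proof. destruct harnack as [c [Hc Hh]].
  assert (HC : 0 <= - ln c).
  { destruct (proj2 Hc) as [l|e]; [| rewrite e, ln_1; lra]. pose proof (ln_increasing c 1 (proj1 Hc) l). rewrite ln_1 in H0; lra. }
  destruct (quasi_add (fun n => ln (sn n)) (- ln c) HC) as [L [HL1 HL2]].
  - intros n k. destruct (sn_mult c n k (proj1 Hc) Hh) as [A1 A2].
    pose proof (sn_pos n); pose proof (sn_pos k).
    assert (ln (c * sn n * sn k) <= ln (sn (n + k))) by (apply ln_le_m; auto; repeat apply Rmult_lt_0_compat; lra).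
    assert (ln (sn (n + k)) <= ln (sn n * sn k / c)) by (apply ln_le_m; auto; apply sn_pos).
    rewrite !ln_mult in H2 by (try apply Rmult_lt_0_compat; lra).
    unfold Rdiv in H3. rewrite !ln_mult, ln_Rinv in H3 by (try apply Rmult_lt_0_compat; try apply Rinv_0_lt_compat; lra).
    apply Rabs_le. lra.
  - exists c, L. auto. Qed.

Lemma Lp_limit c L p : 0 < c <= 1 -> Harn c -> 0 < p ->
  (forall j, Rabs (ln (sn (S j)) / INR (S j) - L) <= - ln c / INR (S j)) ->
  Un_cv (LPhi_seq N pi P phib p) L.
Proof. intros Hc Hh Hp Hb. apply cv_of_bound with (K := 2 * - ln c). intros j.
  set (n := S j). set (s := sn n).
  assert (Hs : 0 < s) by apply sn_pos.
  set (Q := sumN N (fun x => rpow (Eprod N P phib n x) p * pi x)).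
  assert (HQ : Rpower (c * s) p <= Q <= Rpower (s / c) p).
  { unfold Q. rewrite (sumN_ext _ (fun x => rpow _ p * pi x) (fun x => pi x * rpow (Eprod N P phib n x) p)) by (intros; ring).
    rewrite <- (sum_pi_const (Rpower (c * s) p)) at 1. rewrite <- (sum_pi_const (Rpower (s / c) p)).
    split; apply sum_pi_le; intros x Hx; destruct (avg c n x (proj1 Hc) Hh Hx) as [A1 A2];
      pose proof (E_pos n x (proj1 Hx)); unfold rpow; destruct (Rlt_dec 0 (Eprod N P phib n x)) as [_|h]; try lra;
      apply Rle_Rpower_l; try lra.
    - split; auto. apply Rmult_lt_0_compat; lra.
    - split; auto. apply Rmult_le_reg_l with c; [lra|]. replace (c * (s / c)) with s by (field; lra). auto. }
  assert (Hcs : 0 < c * s) by (apply Rmult_lt_0_compat; lra).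
  assert (HQp : 0 < Q) by (eapply Rlt_le_trans; [apply exp_pos| apply HQ]).
  assert (L1 : ln (Rpower (c * s) p) <= ln Q) by (apply ln_le_m; [apply exp_pos| apply HQ]).
  assert (L2 : ln Q <= ln (Rpower (s / c) p)) by (apply ln_le_m; auto; apply HQ).
  rewrite ln_Rpower in L1, L2. rewrite ln_mult in L1 by lra. unfold Rdiv in L2. rewrite ln_mult, ln_Rinv in L2 by (try apply Rinv_0_lt_compat; lra).
  specialize (Hb j). fold n s in Hb.
  assert (Hn : 0 < INR n) by (apply lt_0_INR; unfold n; lia).
  unfold LPhi_seq. fold n. fold Q.
  assert (Rabs (ln Q / (INR n * p) - ln s / INR n) <= - ln c / INR n).
  { replace (ln Q / (INR n * p) - ln s / INR n) with ((ln Q - p * ln s) / p / INR n) by (field; lra).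
    unfold Rdiv. rewrite Rabs_mult, (Rabs_right (/ INR n)) by (left; apply Rinv_0_lt_compat; auto).
    apply Rmult_le_compat_r; [left; apply Rinv_0_lt_compat; auto|].
    rewrite Rabs_mult, (Rabs_right (/ p)) by (left; apply Rinv_0_lt_compat; auto).
    apply Rmult_le_reg_r with p; auto. rewrite Rmult_assoc, Rinv_l, Rmult_1_r by lra.
    apply Rabs_le. nra. }
  replace (ln Q / (INR n * p) - L) with ((ln Q / (INR n * p) - ln s / INR n) + (ln s / INR n - L)) by ring.
  eapply Rle_trans; [apply Rabs_triang|]. unfold Rdiv in *. lra. Qed.

Definition Tn k h := Nat.iter k (Top N P phib gam) h.
Notation g := (ghat N P gam).

Lemma ghat_nonneg x : (x < N)%nat -> 0 <= g x.
Proof. intros Hx. unfold ghat. apply sumN_nonneg. intros y Hy.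
  apply Rmult_le_pos; [apply (Hgam0 _ _ _ _ _ H)| apply (HP0 _ _ _ _ _ H)]; auto. Qed.

Lemma ghat_pos : exists x0, inS N pi x0 /\ 0 < g x0.
Proof. destruct (HA1g _ _ _ _ _ H) as [x [y [Hx [Hy [Hp [HP Hg]]]]]]. exists x. split; [split; auto|].
  unfold ghat. eapply Rlt_le_trans; [| apply sumN_ge_term with (y := y); auto].
  - apply Rmult_lt_0_compat; auto.
  - intros z Hz. apply Rmult_le_pos; [apply (Hgam0 _ _ _ _ _ H)| apply (HP0 _ _ _ _ _ H)]; auto. Qed.

Lemma V_zero x : Vop N P phib (fun _ => 0) x = 0.
Proof. unfold Vop. rewrite (sumN_ext _ _ (fun _ => 0)) by (intros; ring). apply sumN_zero. Qed.

Lemma V_lin f h a b x : Vop N P phib (fun y => a * f y + b * h y) x = a * Vop N P phib f x + b * Vop N P phib h x.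
Proof. exact (Vn_lin 1 f h a b x). Qed.

Lemma Tn_succ k h x : Tn (S k) h x = Top N P phib gam (Tn k h) x.
Proof. reflexivity. Qed.

Lemma Top_ext f h x : (forall y, f y = h y) -> Top N P phib gam f x = Top N P phib gam h x.
Proof. intros E. unfold Top. rewrite (V_ext f h); auto. Qed.

Lemma Tn_ext k f h x : (forall y, f y = h y) -> Tn k f x = Tn k h x.
Proof. revert x; induction k; intros x E; [apply E|]. rewrite !Tn_succ. apply Top_ext. auto. Qed.

Lemma Top_S f h x : inS N pi x -> (forall y, inS N pi y -> f y = h y) -> Top N P phib gam f x = Top N P phib gam h x.
Proof. intros Hx E. unfold Top. rewrite (V_S f h); auto. Qed.

Lemma Tn_S k f h x : inS N pi x -> (forall y, inS N pi y -> f y = h y) -> Tn k f x = Tn k h x.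
Proof. revert x; induction k; intros x Hx E; [apply E; auto|]. rewrite !Tn_succ. apply Top_S; auto. Qed.

Lemma Tn_decomp k h x : Tn k h x = Vn N P phib k h x + Tn k (fun _ => 0) x.
Proof. revert x; induction k; intros x; [unfold Tn, Vn; simpl; ring|].
  rewrite !Tn_succ, Vn_succ. unfold Top.
  rewrite (V_ext (Tn k h) (fun y => 1 * Vn N P phib k h y + 1 * Tn k (fun _ => 0) y)) by (intros; rewrite IHk; ring).
  rewrite V_lin. rewrite (V_ext (Tn k (fun _ => 0)) (fun y => 1 * Tn k (fun _ => 0) y)) by (intros; ring).
  rewrite (V_ext (fun y => 1 * Tn k (fun _ => 0) y) (fun y => 1 * Tn k (fun _ => 0) y + 0 * Tn k (fun _ => 0) y)) by (intros; ring).
  rewrite V_lin. ring. Qed.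

Lemma sol_fixed h k x : markov_sol N pi P phib gam h -> inS N pi x -> Tn k h x = h x.
Proof. intros [Hh Hae]. revert x; induction k; intros x Hx; [reflexivity|].
  rewrite Tn_succ. rewrite (Top_S (Tn k h) h); auto. symmetry. apply Hae; apply Hx. Qed.

Lemma T0_succ k x : Tn (S k) (fun _ => 0) x = Vn N P phib k g x + Tn k (fun _ => 0) x.
Proof. unfold Tn. rewrite Nat.iter_succ_r. fold (Tn k (Top N P phib gam (fun _ => 0))).
  rewrite Tn_decomp. f_equal. apply Vn_ext. intros y. unfold Top. rewrite V_zero. ring. Qed.

Lemma Tn0_nonneg k x : inS N pi x -> 0 <= Tn k (fun _ => 0) x.
Proof. revert x; induction k; intros x Hx; [unfold Tn; simpl; lra|]. rewrite T0_succ.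
  pose proof (IHk x Hx). assert (0 <= Vn N P phib k g x) by (apply Vn_nonneg; auto; intros y Hy; apply ghat_nonneg; apply Hy). lra. Qed.

Lemma Tn0_mono n m x : (n <= m)%nat -> inS N pi x -> Tn n (fun _ => 0) x <= Tn m (fun _ => 0) x.
Proof. intros Hnm Hx. induction Hnm; [lra|]. rewrite T0_succ.
  assert (0 <= Vn N P phib m g x) by (apply Vn_nonneg; auto; intros y Hy; apply ghat_nonneg; apply Hy). lra. Qed.

Lemma Tn_add a b h x : Tn (a + b) h x = Tn a (Tn b h) x.
Proof. unfold Tn. rewrite Nat.iter_add. reflexivity. Qed.

Lemma Vn_abs k f B x : inS N pi x -> (forall y, inS N pi y -> Rabs (f y) <= B) ->
  Rabs (Vn N P phib k f x) <= B * Eprod N P phib k x.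
Proof. intros Hx Hf. apply Rabs_le. rewrite <- !Vn_const.
  replace (- Vn N P phib k (fun _ => B) x) with (Vn N P phib k (fun _ => - B) x).
  - split; apply Vn_mono; auto; intros y Hy; specialize (Hf y Hy); pose proof (Rle_abs (f y)); pose proof (Rle_abs (- f y)); rewrite Rabs_Ropp in *; lra.
  - rewrite !Vn_const. ring. Qed.

Lemma no_sol c L : 0 < c <= 1 -> Harn c ->
  (forall j, Rabs (ln (sn (S j)) / INR (S j) - L) <= - ln c / INR (S j)) -> 0 <= L ->
  forall h, ~ markov_sol N pi P phib gam h.
Proof. intros Hc Hh Hb HL h Hsol.
  assert (Hsn : forall n, c <= sn n).
  { intros [|j].
    - unfold sn. rewrite (sumN_ext _ _ (fun x => pi x * 1)) by (intros; reflexivity). rewrite sum_pi_const. lra.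
    - specialize (Hb j). apply Rabs_le_between in Hb. 
      assert (Hn : 0 < INR (S j)) by (apply lt_0_INR; lia).
      assert (ln c <= ln (sn (S j))).
      { apply Rmult_le_reg_r with (/ INR (S j)); [apply Rinv_0_lt_compat; auto|].
        assert (0 <= L / INR (S j)) by (unfold Rdiv; apply Rmult_le_pos; [auto| left; apply Rinv_0_lt_compat; auto]). unfold Rdiv in *. lra. }
      destruct (Rle_lt_dec c (sn (S j))) as [ok|nok]; auto.
      pose proof (ln_increasing _ _ (sn_pos (S j)) nok). lra. }
  assert (HE : forall n x, inS N pi x -> c * c <= Eprod N P phib n x).
  { intros n x Hx. destruct (avg c n x (proj1 Hc) Hh Hx). specialize (Hsn n). nra. }
  destruct ghat_pos as [x0 [Hx0 Hg0]].
  destruct phib_bounds as [lo [hi [Hl [Hhi Hbd]]]].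
  assert (Hev : forall x, (x < N)%nat -> 0 < pi x -> exists M, forall n, (n >= M)%nat -> 0 < Tn n (fun _ => 0) x).
  { intros x Hx Hpx. destruct (path x x0 Hx Hx0) as [k Hk]. exists (S k). intros n Hn.
    eapply Rlt_le_trans; [| apply (Tn0_mono (S k)); auto; split; auto]. rewrite T0_succ.
    assert (lo ^ k * Pn N P k x x0 * g x0 <= Vn N P phib k g x).
    { apply (Vn_path lo); auto; [lra| intros; apply Hbd; auto| split; auto| intros z Hz; apply ghat_nonneg; apply Hz]. }
    assert (0 < lo ^ k * Pn N P k x x0 * g x0) by (repeat apply Rmult_lt_0_compat; auto; apply pow_lt; lra).
    pose proof (Tn0_nonneg k x (conj Hx Hpx)). lra. }
  destruct (fin_event N (fun x => 0 < pi x) (fun n x => 0 < Tn n (fun _ => 0) x) Hev) as [K HK].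
  destruct (fin_min N (fun x => 0 < pi x) (Tn K (fun _ => 0))) as [d [Hd Hd']].
  { intros x Hx Hpx. apply HK; auto. }
  assert (Hstep : forall b x, inS N pi x -> d * (c * c) + Tn b (fun _ => 0) x <= Tn (b + K) (fun _ => 0) x).
  { intros b x Hx. rewrite Tn_add, (Tn_decomp b (Tn K (fun _ => 0)) x). apply Rplus_le_compat_r.
    apply Rle_trans with (d * Eprod N P phib b x); [apply Rmult_le_compat_l; [lra| apply HE; auto]|].
    rewrite <- Vn_const. apply Vn_mono; auto. intros y Hy. apply Hd'; apply Hy. }
  assert (Hind : forall i, INR i * (d * (c * c)) <= Tn (i * K) (fun _ => 0) x0).
  { induction i; [change (INR 0) with 0; rewrite Rmult_0_l; apply Tn0_nonneg; auto|].
    replace (S i * K)%nat with (i * K + K)%nat by lia. rewrite S_INR. specialize (Hstep (i * K)%nat x0 Hx0). lra. }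
  assert (Hcc : 0 < d * (c * c)) by (repeat apply Rmult_lt_0_compat; lra).
  destruct (arch_big (d * (c * c)) (h x0) Hcc) as [i Hi].
  specialize (Hind i). rewrite <- (sol_fixed h (i * K) x0 Hsol Hx0) in Hi.
  rewrite Tn_decomp in Hi.
  assert (0 <= Vn N P phib (i * K) h x0) by (apply Vn_nonneg; auto; intros y Hy; apply (proj1 Hsol); apply Hy).
  lra. Qed.

Lemma Top_cont (F : nat -> nat -> R) G x : inS N pi x -> (forall y, inS N pi y -> Un_cv (fun n => F n y) (G y)) ->
  Un_cv (fun n => Top N P phib gam (F n) x) (Top N P phib gam G x).
Proof. intros Hx HF. unfold Top. apply CV_plus; [| apply Un_cv_const]. unfold Vop.
  apply sumN_cv. intros y Hy. destruct (pi_cases y Hy) as [e|s].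
  - rewrite (closure0 x y); auto; [| lra]. rewrite Rmult_0_r. eapply Un_cv_ext; [| apply (Un_cv_const 0)]. intros; simpl; ring.
  - apply CV_mult; [apply CV_mult; [apply HF; auto| apply Un_cv_const]| apply Un_cv_const]. Qed.

Lemma decay c L : 0 < c <= 1 -> Harn c ->
  (forall j, Rabs (ln (sn (S j)) / INR (S j) - L) <= - ln c / INR (S j)) -> L < 0 ->
  exists K rho, 0 < K /\ 0 < rho < 1 /\ forall n x, inS N pi x -> Eprod N P phib n x <= K * rho ^ n.
Proof. intros Hc Hh Hb HL.
  assert (HC : 0 <= - ln c).
  { destruct (proj2 Hc) as [l|e]; [| rewrite e, ln_1; lra]. pose proof (ln_increasing c 1 (proj1 Hc) l). rewrite ln_1 in H0; lra. }
  exists (exp (- ln c) / c), (exp L). split; [apply Rdiv_lt_0_compat; [apply exp_pos| lra]|].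
  split; [split; [apply exp_pos| rewrite <- exp_0; apply exp_increasing; auto]|].
  assert (Hsn : forall n, sn n <= exp (- ln c) * exp L ^ n).
  { intros [|j].
    - unfold sn. rewrite (sumN_ext _ _ (fun x => pi x * 1)) by (intros; reflexivity). rewrite sum_pi_const.
      simpl. rewrite Rmult_1_r. rewrite <- exp_0. apply exp_le_m; auto.
    - specialize (Hb j). apply Rabs_le_between in Hb.
      assert (Hn : 0 < INR (S j)) by (apply lt_0_INR; lia).
      assert (ln (sn (S j)) <= INR (S j) * L + - ln c).
      { apply Rmult_le_reg_r with (/ INR (S j)); [apply Rinv_0_lt_compat; auto|].
        replace ((INR (S j) * L + - ln c) * / INR (S j)) with (L + - ln c / INR (S j)) by (field; lra).
        unfold Rdiv in Hb. lra. }
      rewrite <- exp_INR_mult, <- exp_plus. rewrite <- (exp_ln (sn (S j))) by apply sn_pos. apply exp_le_m. lra. }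
  intros n x Hx. destruct (avg c n x (proj1 Hc) Hh Hx) as [_ A2].
  apply Rmult_le_reg_l with c; [lra|]. specialize (Hsn n).
  replace (c * (exp (- ln c) / c * exp L ^ n)) with (exp (- ln c) * exp L ^ n) by (field; lra). lra. Qed.

Lemma good_case c L : 0 < c <= 1 -> Harn c ->
  (forall j, Rabs (ln (sn (S j)) / INR (S j) - L) <= - ln c / INR (S j)) -> L < 0 ->
  exists hs, markov_sol N pi P phib gam hs /\
    forall h x, inS N pi x -> Un_cv (fun n => Tn n h x) (hs x).
Proof. intros Hc Hh Hb HL.
  destruct (decay c L Hc Hh Hb HL) as [K [rho [HK [Hrho HE]]]].
  assert (Hvn : forall f x, inS N pi x -> Un_cv (fun n => Vn N P phib n f x) 0).
  { intros f x Hx. destruct (fin_max N (fun y => 0 < pi y) (fun y => Rabs (f y))) as [B [HB HB']].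
    intros e He. destruct (pow_lt_1_zero rho ltac:(rewrite Rabs_right; lra) (e / (B * K))) as [M HM].
    { apply Rdiv_lt_0_compat; auto. apply Rmult_lt_0_compat; auto. }
    exists M. intros n Hn. unfold Rdist. rewrite Rminus_0_r.
    assert (A1 : Rabs (Vn N P phib n f x) <= B * Eprod N P phib n x) by (apply Vn_abs; auto; intros y Hy; apply HB'; apply Hy).
    specialize (HM n Hn). rewrite Rabs_right in HM by (apply Rle_ge, pow_le; lra).
    specialize (HE n x Hx).
    apply Rle_lt_trans with (B * (K * rho ^ n)); [apply Rle_trans with (B * Eprod N P phib n x); auto; apply Rmult_le_compat_l; lra|].
    apply Rmult_lt_reg_r with (/ (B * K)); [apply Rinv_0_lt_compat, Rmult_lt_0_compat; auto|].
    replace (B * (K * rho ^ n) * / (B * K)) with (rho ^ n) by (field; lra). unfold Rdiv in HM. lra. }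
  destruct (fin_max N (fun y => 0 < pi y) g) as [G [HG HG']].
  assert (Hbd : forall n x, inS N pi x -> Tn n (fun _ => 0) x <= G * K * (1 - rho ^ n) / (1 - rho)).
  { intros n x Hx. induction n; [unfold Tn; simpl; replace (1 - 1) with 0 by ring; unfold Rdiv; lra|].
    rewrite T0_succ. assert (Vn N P phib n g x <= G * (K * rho ^ n)).
    { apply Rle_trans with (G * Eprod N P phib n x); [| apply Rmult_le_compat_l; [lra| apply HE; auto]].
      eapply Rle_trans; [apply Rle_abs| apply Vn_abs; auto]. intros y Hy. rewrite Rabs_right; [apply HG'; apply Hy|].
      apply Rle_ge, ghat_nonneg; apply Hy. }
    replace (G * K * (1 - rho ^ S n) / (1 - rho)) with (G * (K * rho ^ n) + G * K * (1 - rho ^ n) / (1 - rho))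
      by (simpl; field; lra). lra. }
  assert (Hlim : forall x, exists l, inS N pi x -> Un_cv (fun n => Tn n (fun _ => 0) x) l).
  { intros x. destruct (classic (inS N pi x)) as [Hx|Hx]; [| exists 0; tauto].
    destruct (growing_cv (fun n => Tn n (fun _ => 0) x)) as [l Hl].
    - intros n. apply Tn0_mono; auto.
    - exists (G * K / (1 - rho)). intros r [n ->]. eapply Rle_trans; [apply Hbd; auto|].
      unfold Rdiv. rewrite !Rmult_assoc. apply Rmult_le_compat_l; [lra|]. apply Rmult_le_compat_l; [lra|].
      assert (0 < / (1 - rho)) by (apply Rinv_0_lt_compat; lra). pose proof (pow_le rho n (Rlt_le _ _ (proj1 Hrho))). nra.
    - exists l; auto. }
  destruct (fchoice _ Hlim) as [hs Hhs].
  assert (Hconv : forall h x, inS N pi x -> Un_cv (fun n => Tn n h x) (hs x)).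
  { intros h x Hx. eapply Un_cv_ext; [intros n; symmetry; apply Tn_decomp|].
    replace (hs x) with (0 + hs x) by ring. apply CV_plus; auto. }
  exists hs. split; auto. split.
  - intros x Hx Hpx. apply (Rle_cv_lim (Un := fun _ => 0) (Vn := fun n => Tn n (fun _ => 0) x)).
    + intros n. apply Tn0_nonneg; split; auto.
    + apply Un_cv_const.
    + apply Hhs; split; auto.
  - intros x Hx Hpx. assert (Hxs : inS N pi x) by (split; auto).
    apply UL_sequence with (fun n => Tn (S n) (fun _ => 0) x).
    + apply (Un_cv_shift (fun n => Tn n (fun _ => 0) x)). apply Hhs; auto.
    + eapply Un_cv_ext; [intros n; symmetry; apply Tn_succ|]. apply Top_cont; auto.
Qed.

Lemma rpow_nonneg a q : 0 <= rpow a q.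
Proof. unfold rpow. destruct (Rlt_dec 0 a); [left; apply exp_pos| lra]. Qed.

Lemma Lpnorm_nonneg p f : 0 <= Lpnorm N pi p f.
Proof. apply rpow_nonneg. Qed.

Lemma Lp_pw p f x : 0 < p -> inS N pi x -> Rabs (f x) * Rpower (pi x) (/ p) <= Lpnorm N pi p f.
Proof. intros Hp Hx. destruct (Rlt_dec 0 (Rabs (f x))) as [a|a].
  2:{ assert (Rabs (f x) = 0) by (pose proof (Rabs_pos (f x)); lra). rewrite H0, Rmult_0_l. apply Lpnorm_nonneg. }
  set (t := Rpower (Rabs (f x)) p * pi x).
  assert (Ht : 0 < t) by (apply Rmult_lt_0_compat; [apply exp_pos| apply Hx]).
  set (Sg := sumN N (fun y => rpow (Rabs (f y)) p * pi y)).
  assert (HS : t <= Sg).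
  { unfold Sg, t. replace (Rpower (Rabs (f x)) p) with (rpow (Rabs (f x)) p) by (unfold rpow; destruct (Rlt_dec 0 (Rabs (f x))); [reflexivity| lra]).
    apply (sumN_ge_term N (fun y => rpow (Rabs (f y)) p * pi y)); [| apply Hx].
    intros y Hy. apply Rmult_le_pos; [apply rpow_nonneg| apply (Hpi0 _ _ _ _ _ H); auto]. }
  unfold Lpnorm. fold Sg. unfold rpow at 1. destruct (Rlt_dec 0 Sg) as [_|h]; [| lra].
  apply Rle_trans with (Rpower t (/ p)).
  - unfold t. rewrite <- Rpower_mult_distr by (try apply exp_pos; apply Hx).
    rewrite Rpower_mult, Rinv_r, Rpower_1 by lra. lra.
  - apply Rle_Rpower_l; [left; apply Rinv_0_lt_compat; auto| lra]. Qed.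

Lemma Lp_to_pw p fs f x : 0 < p -> LpConv N pi p fs f -> inS N pi x -> Un_cv (fun n => fs n x) (f x).
Proof. intros Hp Hc Hx e He. set (k := Rpower (pi x) (/ p)). assert (Hk : 0 < k) by apply exp_pos.
  destruct (Hc (e * k)) as [M HM]; [apply Rmult_lt_0_compat; auto|]. exists M. intros n Hn.
  specialize (HM n Hn). unfold Rdist in *. rewrite Rminus_0_r, Rabs_right in HM by (apply Rle_ge, Lpnorm_nonneg).
  pose proof (Lp_pw p (fun y => fs n y - f y) x Hp Hx). simpl in H0. fold k in H0.
  apply Rmult_lt_reg_r with k; auto. lra. Qed.

Lemma Lp_from_pw p fs f : 0 < p -> (forall x, inS N pi x -> Un_cv (fun n => fs n x) (f x)) -> LpConv N pi p fs f.
Proof. intros Hp Hc e He. set (e' := e / 2).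
  destruct (fin_event N (fun x => 0 < pi x) (fun n x => Rabs (fs n x - f x) < e')) as [M HM].
  { intros x Hx Hpx. destruct (Hc x (conj Hx Hpx) e') as [M HM]; [unfold e'; lra|]. exists M. apply HM. }
  exists M. intros n Hn. unfold Rdist. rewrite Rminus_0_r, Rabs_right by (apply Rle_ge, Lpnorm_nonneg).
  set (Sg := sumN N (fun y => rpow (Rabs (fs n y - f y)) p * pi y)).
  assert (HS : Sg <= Rpower e' p).
  { unfold Sg. rewrite (sumN_ext _ _ (fun y => pi y * rpow (Rabs (fs n y - f y)) p)) by (intros; ring).
    rewrite <- (sum_pi_const (Rpower e' p)). apply sum_pi_le. intros x Hx.
    specialize (HM n Hn x (proj1 Hx) (proj2 Hx)). unfold rpow. destruct (Rlt_dec 0 _) as [a|a].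
    - apply Rle_Rpower_l; lra.
    - left; apply exp_pos. }
  unfold Lpnorm. fold Sg. unfold rpow at 1. destruct (Rlt_dec 0 Sg) as [a|a]; [| lra].
  apply Rle_lt_trans with (Rpower (Rpower e' p) (/ p)).
  - apply Rle_Rpower_l; [left; apply Rinv_0_lt_compat; auto| lra].
  - rewrite Rpower_mult, Rinv_r, Rpower_1 by (unfold e'; lra). unfold e'; lra. Qed.

Lemma compactV p : 0 < p -> compact_op N pi p (Nat.iter 1 (Vop N P phib)).
Proof. intros Hp f Hf.
  destruct phib_bounds as [lo [hi [Hl [Hhi Hbd]]]].
  destruct (fin_max N (fun y => 0 < pi y) (fun y => / Rpower (pi y) (/ p))) as [Bf [HBf HBf']].
  assert (Hfb : forall k y, inS N pi y -> Rabs (f k y) <= Bf).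
  { intros k y Hy. pose proof (Lp_pw p (f k) y Hp Hy). specialize (Hf k).
    assert (Hk : 0 < Rpower (pi y) (/ p)) by apply exp_pos.
    apply Rle_trans with (/ Rpower (pi y) (/ p)); [| apply HBf'; apply Hy].
    apply Rmult_le_reg_r with (Rpower (pi y) (/ p)); auto. rewrite Rinv_l by lra. lra. }
  destruct (bwN N (fun x => 0 < pi x) (fun k x => Vop N P phib (f k) x) (Bf * hi)) as [s [G [Hs HG]]].
  { intros k x Hx Hpx. apply Rle_trans with (Bf * Eprod N P phib 1 x).
    - exact (Vn_abs 1 (f k) Bf x (conj Hx Hpx) (Hfb k)).
    - apply Rmult_le_compat_l; [lra|]. pose proof (E_bounds lo hi (proj1 Hl) Hbd 1 x Hx). rewrite pow_1 in H0. lra. }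
  exists s, G. split; auto.
  apply (Lp_from_pw p (fun k => Nat.iter 1 (Vop N P phib) (f (s k))) G Hp).
  intros x Hx. apply HG; apply Hx. Qed.

Lemma main_sec :
  (forall p, 1 <= p -> A3 N pi P phib gam p) /\
  exists L : R,
    Un_cv (LPhi1_seq N pi P phib) L /\
    (forall p, 1 <= p -> Un_cv (LPhi_seq N pi P phib p) L) /\
    (forall p, 1 <= p ->
      ((exists h, markov_sol N pi P phib gam h) <-> L < 0) /\
      ((exists h, markov_sol N pi P phib gam h /\
          forall h', markov_sol N pi P phib gam h' -> aeeq N pi h h') <-> L < 0) /\
      ((exists h hlim, inHp N pi h /\ inHp N pi hlim /\
          LpConv N pi p (fun n => Nat.iter n (Top N P phib gam) h) hlim) <-> L < 0) /\
      ((exists hs, markov_sol N pi P phib gam hs /\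
          (forall h', markov_sol N pi P phib gam h' -> aeeq N pi hs h') /\
          (forall h, inHp N pi h ->
             LpConv N pi p (fun n => Nat.iter n (Top N P phib gam) h) hs)) <-> L < 0)).
Proof. split.
  - intros p Hp. split; [| split].
    + intros x Hx _. apply ghat_nonneg; auto.
    + intros h1 h2 He x Hx Hpx. apply V_S; [split; auto|]. intros y Hy. apply He; apply Hy.
    + exists 1%nat. split; auto. apply compactV. lra.
  - destruct Lexists as [c [L [Hc [Hh [HL Hb]]]]]. exists L. split; [exact HL|]. split.
    + intros p Hp. apply (Lp_limit c L p Hc Hh); auto; lra.
    + intros p Hp. assert (Hp0 : 0 < p) by lra. destruct (Rlt_dec L 0) as [Lneg|Lpos].
      * destruct (good_case c L Hc Hh Hb Lneg) as [hs [Hsol Hconv]].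
        assert (Huniq : forall h', markov_sol N pi P phib gam h' -> aeeq N pi hs h').
        { intros h' Hs' x Hx Hpx. assert (Hxs : inS N pi x) by (split; auto).
          apply UL_sequence with (fun n => Tn n h' x); auto.
          eapply Un_cv_ext; [| apply Un_cv_const]. intros n; simpl. symmetry. apply sol_fixed; auto. }
        assert (HLp : forall h, LpConv N pi p (fun n => Nat.iter n (Top N P phib gam) h) hs).
        { intros h. apply (Lp_from_pw p (fun n => Tn n h) hs Hp0). intros x Hx. apply Hconv; auto. }
        split; [| split; [| split]]; split; intros; auto.
        -- exists hs; auto.
        -- exists hs; auto.
        -- exists (fun _ => 0), hs. split; [intros ? ? ?; simpl; lra| split; [apply (proj1 Hsol)| apply HLp]].
        -- exists hs; auto.
      * assert (HL0 : 0 <= L) by lra. pose proof (no_sol c L Hc Hh Hb HL0) as Hno.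
        split; [| split; [| split]]; split; intros HH; try lra.
        -- destruct HH as [h Hs]. exfalso; apply (Hno h Hs).
        -- destruct HH as [h [Hs _]]. exfalso; apply (Hno h Hs).
        -- destruct HH as [h [hlim [Hh1 [Hh2 Hcv]]]]. exfalso; apply (Hno hlim).
           split; auto. intros x Hx Hpx. assert (Hxs : inS N pi x) by (split; auto).
           pose proof (Lp_to_pw p _ _ x Hp0 Hcv Hxs) as Hpw.
           apply UL_sequence with (fun n => Tn (S n) h x).
           ++ apply (Un_cv_shift (fun n => Tn n h x)). exact Hpw.
           ++ eapply Un_cv_ext; [intros n; symmetry; apply Tn_succ|]. apply Top_cont; auto.
              intros y Hy. apply (Lp_to_pw p _ _ y Hp0 Hcv Hy).
        -- destruct HH as [h [Hs _]]. exfalso; apply (Hno h Hs).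
Qed.
End S.

Theorem mainTheorem2
  (N : nat) (pi : nat -> R) (P phib gam : nat -> nat -> R)
  (Hpi0 : forall x, (x < N)%nat -> 0 <= pi x)
  (Hpi1 : sumN N pi = 1)
  (HP0 : forall x y, (x < N)%nat -> (y < N)%nat -> 0 <= P x y)
  (HP1 : forall x, (x < N)%nat -> sumN N (P x) = 1)
  (Hstat : forall y, (y < N)%nat -> sumN N (fun x => pi x * P x y) = pi y)
  (HA1phi : forall x y, (x < N)%nat -> (y < N)%nat -> 0 < phib x y)
  (Hgam0 : forall x y, (x < N)%nat -> (y < N)%nat -> 0 <= gam x y)
  (HA1g : exists x y, (x < N)%nat /\ (y < N)%nat /\ 0 < pi x /\ 0 < P x y /\ 0 < gam x y)
  (HA2 : forall B : nat -> bool, 0 < measB N pi B ->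
         forall x, (x < N)%nat -> exists n, 0 < PnB N P n x B) :
  (forall p, 1 <= p -> A3 N pi P phib gam p) /\
  exists L : R,
    Un_cv (LPhi1_seq N pi P phib) L /\
    (forall p, 1 <= p -> Un_cv (LPhi_seq N pi P phib p) L) /\
    (forall p, 1 <= p ->
      ((exists h, markov_sol N pi P phib gam h) <-> L < 0) /\
      ((exists h, markov_sol N pi P phib gam h /\
          forall h', markov_sol N pi P phib gam h' -> aeeq N pi h h') <-> L < 0) /\
      ((exists h hlim, inHp N pi h /\ inHp N pi hlim /\
          LpConv N pi p (fun n => Nat.iter n (Top N P phib gam) h) hlim) <-> L < 0) /\
      ((exists hs, markov_sol N pi P phib gam hs /\
          (forall h', markov_sol N pi P phib gam h' -> aeeq N pi hs h') /\
          (forall h, inHp N pi h ->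
             LpConv N pi p (fun n => Nat.iter n (Top N P phib gam) h) hs)) <-> L < 0)).
Proof. apply main_sec. constructor; auto. Qed.
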